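(* Assume CH. There exists a Luzin set $L\subseteq\mathbb{R}$ such that $L+L=\{a+b:a,b\in L\}$ is a Bernstein set.
   Context: A Luzin set is a set $L\subseteq\mathbb{R}$ with $|L|=\mathfrak{c}$ such that $L\cap M$ is countable for every meager $M\subseteq\mathbb{R}$. A set $B\subseteq\mathbb{R}$ is a Bernstein set if for every nonempty perfect set $P\subseteq\mathbb{R}$ both $B\cap P\neq\emptyset$ and $(\mathbb{R}\setminus B)\cap P\neq\emptyset$. *)

(* Defs.v *)
From Stdlib Require Import Reals.
Open Scope R_scope.

(* countable (possibly empty/finite): covered by a sequence *)
Definition countable_set (A : R -> Prop) : Prop :=
  exists f : nat -> R, forall x, A x -> exists n, f n = x.

(* |A| = continuum: R injects into A (A ⊆ R gives the other direction) *)
Definition has_size_continuum (A : R -> Prop) : Prop :=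
  exists g : R -> R, (forall x y, g x = g y -> x = y) /\ (forall x, A (g x)).

Definition CH : Prop :=
  forall A : R -> Prop, countable_set A \/ has_size_continuum A.

(* nowhere dense: every nonempty open interval contains a nonempty open
   subinterval disjoint from N (i.e. the closure of N has empty interior) *)
Definition nowhere_dense (N : R -> Prop) : Prop :=
  forall a b, a < b ->
    exists c d, a <= c /\ c < d /\ d <= b /\ (forall x, c < x < d -> ~ N x).

Definition meager (M : R -> Prop) : Prop :=
  exists N : nat -> R -> Prop,
    (forall n, nowhere_dense (N n)) /\ (forall x, M x -> exists n, N n x).

Definition Luzin_set (L : R -> Prop) : Prop :=
  has_size_continuum L /\
  forall M : R -> Prop, meager M -> countable_set (fun x => L x /\ M x).

Definition closed_set (P : R -> Prop) : Prop :=
  forall x, (forall eps, 0 < eps -> exists y, P y /\ Rabs (y - x) < eps) -> P x.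

Definition nonempty_perfect (P : R -> Prop) : Prop :=
  (exists x, P x) /\ closed_set P /\
  (forall x, P x -> forall eps, 0 < eps ->
     exists y, P y /\ y <> x /\ Rabs (y - x) < eps).

Definition Bernstein_set (B : R -> Prop) : Prop :=
  forall P : R -> Prop, nonempty_perfect P ->
    (exists x, B x /\ P x) /\ (exists x, ~ B x /\ P x).

Definition sumset (A B : R -> Prop) : R -> Prop :=
  fun z => exists a b, A a /\ B b /\ z = a + b.

(* Main.v *)
Require Import Defs.
From Stdlib Require Import Reals Lra Lia Classical ClassicalEpsilon FunctionalExtensionality Cantor.
From mathcomp Require ssreflect ssrfun ssrbool eqtype boolp wochoice Rstruct.
Import Defs.
Open Scope R_scope.


Lemma cnt_sub (A B : R -> Prop) :
  (forall x, B x -> A x) -> countable_set A -> countable_set B.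
Proof. intros H [f Hf]. exists f. intros x Bx. apply Hf, H, Bx. Qed.

Lemma cnt_empty : countable_set (fun _ => False).
Proof. exists (fun _ => 0). intros x []. Qed.

Lemma cnt_Union (A : nat -> R -> Prop) :
  (forall n, countable_set (A n)) -> countable_set (fun x => exists n, A n x).
Proof.
  intros H. destruct (ClassicalEpsilon.choice (fun n (f : nat -> R) => forall x, A n x -> exists m, f m = x) H) as [F HF].
  exists (fun k => let (n, m) := of_nat k in F n m).
  intros x [n Hn]. destruct (HF n x Hn) as [m Hm].
  exists (to_nat (n, m)). rewrite cancel_of_to. exact Hm.
Qed.

Lemma cnt_union2 (A B : R -> Prop) :
  countable_set A -> countable_set B -> countable_set (fun x => A x \/ B x).
Proof.
  intros HA HB.
  apply (cnt_sub (fun x => exists n, (if Nat.eqb n 0 then A else B) x)).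
  - intros x [H|H]; [exists 0%nat | exists 1%nat]; exact H.
  - apply cnt_Union. intros n; destruct (Nat.eqb n 0); assumption.
Qed.

Lemma cnt_image (A : R -> Prop) (g : R -> R) :
  countable_set A -> countable_set (fun y => exists x, A x /\ y = g x).
Proof.
  intros [f Hf]. exists (fun n => g (f n)).
  intros y [x [Ax ->]]. destruct (Hf x Ax) as [n Hn]. exists n. rewrite Hn; reflexivity.
Qed.

Lemma cnt_image2 (A B : R -> Prop) (g : R -> R -> R) :
  countable_set A -> countable_set B ->
  countable_set (fun y => exists a b, A a /\ B b /\ y = g a b).
Proof.
  intros [f Hf] [f' Hf'].
  exists (fun k => let (n, m) := of_nat k in g (f n) (f' m)).
  intros y [a [b [Aa [Bb ->]]]].
  destruct (Hf a Aa) as [n Hn]. destruct (Hf' b Bb) as [m Hm].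
  exists (to_nat (n, m)). rewrite cancel_of_to. rewrite Hn, Hm; reflexivity.
Qed.

Lemma nd_sub (N N' : R -> Prop) :
  (forall x, N' x -> N x) -> nowhere_dense N -> nowhere_dense N'.
Proof.
  intros H HN a b ab. destruct (HN a b ab) as [c [d [? [? [? Hd]]]]].
  exists c, d; repeat split; auto. intros x Hx Nx. apply (Hd x Hx), H, Nx.
Qed.

Lemma nd_empty : nowhere_dense (fun _ => False).
Proof. intros a b ab. exists a, b; repeat split; lra || auto. Qed.

Lemma nd_single (p : R) : nowhere_dense (fun x => x = p).
Proof.
  intros a b ab.
  destruct (Rle_lt_dec p ((a + b) / 2)).
  - exists ((a+b)/2), b; repeat split; try lra. intros x Hx ->; lra.
  - exists a, ((a+b)/2); repeat split; try lra. intros x Hx ->; lra.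
Qed.

Lemma nd_refl (N : R -> Prop) (p : R) :
  nowhere_dense N -> nowhere_dense (fun x => N (p - x)).
Proof.
  intros HN a b ab. destruct (HN (p - b) (p - a)) as [c [d [? [? [? Hd]]]]]; [lra|].
  exists (p - d), (p - c); repeat split; try lra.
  intros x Hx Nx. apply (Hd (p - x)); [lra | exact Nx].
Qed.

Lemma meager_sub (M M' : R -> Prop) :
  (forall x, M' x -> M x) -> meager M -> meager M'.
Proof. intros H [N [HN HM]]. exists N. split; auto. Qed.

Lemma meager_Union (A : nat -> R -> Prop) :
  (forall n, meager (A n)) -> meager (fun x => exists n, A n x).
Proof.
  intros H. destruct (ClassicalEpsilon.choice (fun n (N : nat -> R -> Prop) => (forall k, nowhere_dense (N k)) /\ (forall x, A n x -> exists k, N k x)) H) as [F HF].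
  exists (fun k => let (n, m) := of_nat k in F n m). split.
  - intros k. destruct (of_nat k) as [n m]. apply (HF n).
  - intros x [n Hn]. destruct (proj2 (HF n) x Hn) as [m Hm].
    exists (to_nat (n, m)). rewrite cancel_of_to. exact Hm.
Qed.

Lemma meager_union2 (A B : R -> Prop) :
  meager A -> meager B -> meager (fun x => A x \/ B x).
Proof.
  intros HA HB.
  apply (meager_sub (fun x => exists n, (if Nat.eqb n 0 then A else B) x)).
  - intros x [H|H]; [exists 0%nat | exists 1%nat]; exact H.
  - apply meager_Union. intros n; destruct (Nat.eqb n 0); assumption.
Qed.

Lemma cnt_meager (A : R -> Prop) : countable_set A -> meager A.
Proof.
  intros [f Hf]. exists (fun n x => x = f n). split.
  - intros n. apply nd_single.
  - intros x Ax. destruct (Hf x Ax) as [n Hn]. exists n. auto.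
Qed.

Lemma meager_refl (M : R -> Prop) (p : R) : meager M -> meager (fun x => M (p - x)).
Proof.
  intros [N [HN HM]]. exists (fun n x => N n (p - x)). split.
  - intros n. apply nd_refl, HN.
  - intros x Mx. apply HM, Mx.
Qed.


Definition rel_nd (P N : R -> Prop) : Prop :=
  forall a b, a < b -> (exists q, P q /\ a < q < b) ->
    exists c d, a <= c /\ c < d /\ d <= b /\ (exists q, P q /\ c < q < d) /\
      forall x, c < x < d -> ~ N x.

Section Baire.
Variable P : R -> Prop.
Variable N : nat -> R -> Prop.
Hypothesis Pcl : closed_set P.
Hypothesis HN : forall n, rel_nd P (N n).

Definition stepP n (a b a' b' : R) : Prop :=
  a < a' /\ a' < b' /\ b' < b /\ b' - a' < / INR (S n) /\
  (exists q, P q /\ a' < q < b') /\ forall x, a' <= x <= b' -> ~ N n x.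

Definition good (a b : R) := a < b /\ exists q, P q /\ a < q < b.

Lemma step_ex n a b : good a b -> exists p : R * R, stepP n a b (fst p) (snd p).
Proof.
  intros [ab Hq]. destruct (HN n a b ab Hq) as [c [d [ac [cd [db [[q [Pq Hqcd]] Hd]]]]]].
  assert (Hpos : 0 < / INR (S n)) by (apply Rinv_0_lt_compat, lt_0_INR; lia).
  set (m := Rmin (Rmin (q - c) (d - q)) (/ INR (S n))).
  assert (m1 : m <= q - c) by (unfold m; eapply Rle_trans; [apply Rmin_l| apply Rmin_l]).
  assert (m2 : m <= d - q) by (unfold m; eapply Rle_trans; [apply Rmin_l| apply Rmin_r]).
  assert (m3 : m <= / INR (S n)) by (unfold m; apply Rmin_r).
  assert (m0 : 0 < m) by (unfold m; repeat apply Rmin_glb_lt; lra).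
  exists (q - m/3, q + m/3). simpl. unfold stepP.
  repeat split; try lra.
  - exists q; repeat split; try lra; auto.
  - intros x Hx. apply Hd. lra.
Qed.

Variable q0 : R.
Hypothesis Pq0 : P q0.

Fixpoint seqI (n : nat) : R * R :=
  match n with
  | O => (q0 - 1, q0 + 1)
  | S n => epsilon (inhabits (0, 0))
             (fun p : R * R => stepP n (fst (seqI n)) (snd (seqI n)) (fst p) (snd p))
  end.

Lemma seqI_good n : good (fst (seqI n)) (snd (seqI n)) /\
   stepP n (fst (seqI n)) (snd (seqI n)) (fst (seqI (S n))) (snd (seqI (S n))).
Proof.
  induction n as [|n IH].
  - assert (G : good (fst (seqI 0)) (snd (seqI 0))).
    { simpl. split; [lra | exists q0; split; [auto | lra]]. }
    split; [exact G|]. simpl seqI at 2 3.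
    apply (epsilon_spec (inhabits (0,0)) (fun p : R * R => stepP 0 (fst (seqI 0)) (snd (seqI 0)) (fst p) (snd p))).
    apply step_ex, G.
  - destruct IH as [_ St].
    assert (G : good (fst (seqI (S n))) (snd (seqI (S n)))).
    { destruct St as [? [? [? [? [? ?]]]]]. split; auto. }
    split; [exact G|]. change (seqI (S (S n))) with (epsilon (inhabits (0, 0))
             (fun p : R * R => stepP (S n) (fst (seqI (S n))) (snd (seqI (S n))) (fst p) (snd p))).
    apply (epsilon_spec (inhabits (0,0)) (fun p : R * R => stepP (S n) (fst (seqI (S n))) (snd (seqI (S n))) (fst p) (snd p))).
    apply step_ex, G.
Qed.

Definition Aa n := fst (seqI n).
Definition Bb n := snd (seqI n).

Lemma A_mono n m : (n <= m)%nat -> Aa n <= Aa m.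
Proof.
  induction 1 as [|m Hle IH]; [lra|]. destruct (seqI_good m) as [_ [Hs _]]. unfold Aa in *. lra.
Qed.

Lemma B_mono n m : (n <= m)%nat -> Bb m <= Bb n.
Proof.
  induction 1 as [|m Hle IH]; [lra|]. destruct (seqI_good m) as [_ [_ [_ [Hs _]]]]. unfold Bb in *. lra.
Qed.

Lemma A_lt_B n m : Aa n < Bb m.
Proof.
  assert (H1 := A_mono n (max n m) (Nat.le_max_l n m)).
  assert (H2 := B_mono m (max n m) (Nat.le_max_r n m)).
  destruct (seqI_good (max n m)) as [[H _] _]. unfold Aa, Bb in *. lra.
Qed.

Lemma baire_core : exists x, P x /\ forall n, ~ N n x.
Proof.
  set (E := fun y => exists n, y = Aa n).
  assert (Eb : bound E). { exists (Bb 0). intros y [n ->]. left. apply A_lt_B. }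
  assert (Ei : exists y, E y) by (exists (Aa 0); exists 0%nat; reflexivity).
  destruct (completeness E Eb Ei) as [x [Hub Hlub]].
  assert (Ax : forall n, Aa n <= x) by (intros n; apply Hub; exists n; reflexivity).
  assert (xB : forall n, x <= Bb n).
  { intros n. apply Hlub. intros y [m ->]. left. apply A_lt_B. }
  exists x. split.
  - apply (Pcl x). intros eps Heps.
    destruct (archimed_cor1 eps Heps) as [[|n] [Hn Hn0]]; [lia|].
    destruct (seqI_good n) as [_ [_ [_ [_ [Hl [[q [Pq Hq]] _]]]]]].
    exists q. split; [exact Pq|].
    assert (a1 := Ax (S n)). assert (b1 := xB (S n)). unfold Aa, Bb in *.
    unfold Rabs; destruct (Rcase_abs (q - x)); lra.
  - intros n Nx. destruct (seqI_good n) as [_ [_ [_ [_ [_ [_ Hd]]]]]].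
    apply (Hd x); [split; [apply (Ax (S n)) | apply (xB (S n))] | exact Nx].
Qed.
End Baire.

Lemma baire_rel (P : R -> Prop) (N : nat -> R -> Prop) :
  closed_set P -> (exists q, P q) -> (forall n, rel_nd P (N n)) ->
  exists x, P x /\ forall n, ~ N n x.
Proof. intros Pcl [q Pq] HN. exact (baire_core P N Pcl HN q Pq). Qed.

Lemma baire_R (M : R -> Prop) : meager M -> exists x, ~ M x.
Proof.
  intros [N [HN HM]].
  destruct (baire_rel (fun _ => True) N) as [x [_ Hx]].
  - intros x _; exact I.
  - exists 0; exact I.
  - intros n a b ab _. destruct (HN n a b ab) as [c [d [? [? [? Hd]]]]].
    exists c, d; repeat split; auto. exists ((c+d)/2); split; [exact I | lra].
  - exists x. intros Mx. destruct (HM x Mx) as [n Hn]. exact (Hx n Hn).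
Qed.

Lemma perfect_avoid (P A : R -> Prop) :
  nonempty_perfect P -> countable_set A -> exists x, P x /\ ~ A x.
Proof.
  intros [Pne [Pcl Pis]] [f Hf].
  destruct (baire_rel P (fun n x => x = f n) Pcl Pne) as [x [Px Hx]].
  - intros n a b ab [q [Pq Hq]].
    assert (He : 0 < Rmin (q - a) (b - q)) by (apply Rmin_glb_lt; lra).
    destruct (Pis q Pq _ He) as [q' [Pq' [nq' Hq']]].
    assert (m1 := Rmin_l (q - a) (b - q)). assert (m2 := Rmin_r (q - a) (b - q)).
    assert (Hq'ab : a < q' < b).
    { revert Hq'. unfold Rabs; destruct (Rcase_abs (q' - q)); intros; lra. }
    (* pick r in {q, q'} different from f n *)
    assert (Hr : exists r, P r /\ a < r < b /\ r <> f n).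
    { destruct (Req_dec q (f n)) as [e|ne].
      - exists q'. split; [exact Pq'|split; [lra|]]. intros e'. apply nq'. congruence.
      - exists q. split; [exact Pq|split; [lra|exact ne]]. }
    destruct Hr as [r [Pr [Hrab nr]]].
    set (d := Rmin (Rmin (r - a) (b - r)) (Rabs (r - f n))).
    assert (d0 : 0 < d).
    { unfold d. repeat apply Rmin_glb_lt; try lra. apply Rabs_pos_lt. lra. }
    assert (d1 : d <= r - a) by (unfold d; eapply Rle_trans; [apply Rmin_l|apply Rmin_l]).
    assert (d2 : d <= b - r) by (unfold d; eapply Rle_trans; [apply Rmin_l|apply Rmin_r]).
    assert (d3 : d <= Rabs (r - f n)) by (unfold d; apply Rmin_r).
    exists (r - d/2), (r + d/2). repeat split; try lra.
    + exists r. repeat split; auto; lra.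
    + intros x Hx ->. revert d3. unfold Rabs; destruct (Rcase_abs (r - f n)); intros; lra.
  - exists x. split; auto. intros Ax. destruct (Hf x Ax) as [n Hn]. apply (Hx n). auto.
Qed.


Definition dec (n : nat) : Z * nat :=
  let (p, m) := of_nat n in let (a, b) := of_nat p in ((Z.of_nat a - Z.of_nat b)%Z, m).
Definition lo (n : nat) : R := let (j, m) := dec n in (IZR j - 1) / INR (S m).
Definition hi (n : nat) : R := let (j, m) := dec n in (IZR j + 1) / INR (S m).

Lemma dec_surj j m : exists n, dec n = (j, m).
Proof.
  exists (to_nat (to_nat (Z.to_nat j, Z.to_nat (- j)), m)).
  unfold dec. rewrite !cancel_of_to. f_equal. lia.
Qed.

Lemma iv_fine x e : 0 < e -> exists n, lo n < x < hi n /\ x - e < lo n /\ hi n < x + e.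
Proof.
  intros He. destruct (archimed_cor1 (e/2)) as [[|m] [Hm Hm0]]; [lra|lia|].
  set (D := INR (S m)).
  assert (D0 : 0 < D) by (apply lt_0_INR; lia).
  set (j := (up (x * D) - 1)%Z).
  destruct (dec_surj j m) as [n Hn]. exists n.
  unfold lo, hi. rewrite Hn. fold D.
  destruct (archimed (x * D)) as [A1 A2].
  assert (Ej : IZR j = IZR (up (x * D)) - 1) by (unfold j; rewrite minus_IZR; reflexivity).
  assert (HvD : / D * D = 1) by (field; lra).
  assert (Hl : (IZR j - 1) / D * D = IZR j - 1) by (field; lra).
  assert (Hh : (IZR j + 1) / D * D = IZR j + 1) by (field; lra).
  set (l := (IZR j - 1) / D) in *. set (h := (IZR j + 1) / D) in *.
  set (v := / D) in *.
  assert (Ev : 1 < e * D / 2).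
  { change (v < e / 2) in Hm. assert (0 < (e/2 - v) * D) by (apply Rmult_lt_0_compat; lra). nra. }
  repeat split; nra.
Qed.

Definition Ccode (k : nat -> bool) (x : R) : Prop :=
  forall n, k n = true -> ~ (lo n < x < hi n).

Definition misses (A : R -> Prop) (n : nat) : bool :=
  if excluded_middle_informative (forall u, lo n < u < hi n -> ~ A u) then true else false.

Lemma misses_true A n : misses A n = true -> forall u, lo n < u < hi n -> ~ A u.
Proof. unfold misses. destruct excluded_middle_informative; [auto | discriminate]. Qed.

Lemma sub_Ccode A x : A x -> Ccode (misses A) x.
Proof. intros Ax n Hn Hx. exact (misses_true A n Hn x Hx Ax). Qed.

Lemma closed_code (P : R -> Prop) : closed_set P -> forall x, Ccode (misses P) x <-> P x.
Proof.
  intros Pcl x. split; [|apply sub_Ccode].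
  intros Cx. apply NNPP. intros nPx.
  assert (Hex : exists eps, 0 < eps /\ forall y, P y -> ~ Rabs (y - x) < eps).
  { apply NNPP. intros Hne. apply nPx, Pcl. intros eps Heps. apply NNPP. intros Hno.
    apply Hne. exists eps. split; auto. intros y Py Hy. apply Hno. exists y; auto. }
  destruct Hex as [eps [Heps Hno]].
  destruct (iv_fine x eps Heps) as [n [Hx [H1 H2]]].
  apply (Cx n); [| exact Hx].
  unfold misses. destruct excluded_middle_informative as [|Hc]; [reflexivity|].
  exfalso. apply Hc. intros u Hu Pu. apply (Hno u Pu).
  unfold Rabs; destruct (Rcase_abs (u - x)); lra.
Qed.

Lemma nd_code (N : R -> Prop) : nowhere_dense N -> nowhere_dense (Ccode (misses N)).
Proof.
  intros HN a b ab. destruct (HN a b ab) as [c [d [ac [cd [db Hd]]]]].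
  destruct (iv_fine ((c + d) / 2) ((d - c) / 2)) as [n [Hx [H1 H2]]]; [lra|].
  exists (lo n), (hi n). repeat split; try lra.
  intros x Hx' Cx. apply (Cx n); [|exact Hx'].
  unfold misses. destruct excluded_middle_informative as [|Hc]; [reflexivity|].
  exfalso. apply Hc. intros u Hu. apply Hd. lra.
Qed.

Fixpoint tsum (k : nat -> bool) (N : nat) : R :=
  match N with
  | O => 0
  | S N => tsum k N + (if k N then 2 else 0) / 3 ^ (S N)
  end.

Lemma tsum_bound k N p :
  tsum k N <= tsum k (N + p) <= tsum k N + / 3 ^ N - / 3 ^ (N + p).
Proof.
  induction p as [|p IH].
  - rewrite Nat.add_0_r. lra.
  - rewrite Nat.add_succ_r. cbn [tsum].
    assert (w0 : 0 < / 3 ^ (N + p)) by (apply Rinv_0_lt_compat, pow_lt; lra).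
    assert (E : / 3 ^ S (N + p) = / 3 ^ (N + p) / 3).
    { simpl. field. apply pow_nonzero. lra. }
    assert (E2 : (if k (N + p)%nat then 2 else 0) / 3 ^ S (N + p) =
                 (if k (N + p)%nat then 2 else 0) * (/ 3 ^ (N + p) / 3)).
    { unfold Rdiv at 1. rewrite E. reflexivity. }
    rewrite E2, E. destruct (k (N + p)%nat); lra.
Qed.

Definition tset k := fun y => exists N, y = tsum k N.

Lemma tset_bound k : bound (tset k).
Proof.
  exists 1. intros y [N ->]. destruct (tsum_bound k 0 N) as [_ H]. simpl in H.
  assert (0 < / 3 ^ N) by (apply Rinv_0_lt_compat, pow_lt; lra). rewrite Rinv_1 in H. lra.
Qed.

Definition hK (k : nat -> bool) : R :=
  proj1_sig (completeness (tset k) (tset_bound k) (ex_intro _ 0 (ex_intro _ 0%nat eq_refl))).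

Lemma hK_ge k N : tsum k N <= hK k.
Proof.
  unfold hK. destruct completeness as [x [Hub Hlub0]]. simpl. apply Hub. exists N; reflexivity.
Qed.

Lemma hK_le k N : hK k <= tsum k N + / 3 ^ N.
Proof.
  unfold hK. destruct completeness as [x [Hub0 Hlub]]. simpl. apply Hlub.
  intros y [M ->].
  assert (w0 : 0 < / 3 ^ N) by (apply Rinv_0_lt_compat, pow_lt; lra).
  destruct (Compare_dec.le_lt_dec N M) as [Hle|Hlt].
  - destruct (Nat.le_exists_sub N M Hle) as [p [-> _]]. rewrite Nat.add_comm.
    destruct (tsum_bound k N p) as [_ H].
    assert (0 < / 3 ^ (N + p)) by (apply Rinv_0_lt_compat, pow_lt; lra). lra.
  - destruct (Nat.le_exists_sub M N (Nat.lt_le_incl _ _ Hlt)) as [p [-> _]].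
    rewrite Nat.add_comm in *. destruct (tsum_bound k M p) as [H _]. lra.
Qed.

Lemma min_diff (k k' : nat -> bool) : (exists n, k n <> k' n) ->
  exists n, k n <> k' n /\ forall m, (m < n)%nat -> k m = k' m.
Proof.
  intros Hex. apply NNPP. intros Hno. destruct Hex as [n0 Hn0]. apply Hn0.
  assert (All : forall n, k n = k' n).
  { intros n. induction n as [n IH] using Wf_nat.lt_wf_ind.
    destruct (Bool.bool_dec (k n) (k' n)) as [e|ne]; [exact e|].
    exfalso. apply Hno. exists n. split; auto. }
  apply All.
Qed.

Lemma hK_inj k k' : hK k = hK k' -> k = k'.
Proof.
  intros E. apply functional_extensionality. intros i. apply NNPP. intros Hi.
  destruct (min_diff k k' (ex_intro _ i Hi)) as [n [Hn Hlt]].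
  assert (Tn : forall N, (N <= n)%nat -> tsum k N = tsum k' N).
  { induction N as [|N IH]; intros HN; [reflexivity|]. simpl.
    rewrite IH by lia. rewrite Hlt by lia. reflexivity. }
  assert (w0 : 0 < / 3 ^ (S n)) by (apply Rinv_0_lt_compat, pow_lt; lra).
  assert (G1 := hK_ge k (S n)). assert (G2 := hK_ge k' (S n)).
  assert (L1 := hK_le k (S n)). assert (L2 := hK_le k' (S n)).
  cbn [tsum] in G1, G2, L1, L2. rewrite (Tn n (le_n n)) in G1, L1.
  unfold Rdiv in *.
  destruct (k n), (k' n); try (apply Hn; reflexivity); lra.
Qed.


Lemma cnt_single (p : R) : countable_set (fun y => y = p).
Proof. exists (fun _ => p). intros x ->. exists 0%nat. reflexivity. Qed.

Lemma perfect_ext (P Q : R -> Prop) :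
  (forall u, P u <-> Q u) -> nonempty_perfect P -> nonempty_perfect Q.
Proof.
  intros E [[x Px] [Pcl Pis]]. split; [|split].
  - exists x. apply E, Px.
  - intros y Hy. apply E, Pcl. intros eps Heps. destruct (Hy eps Heps) as [z [Qz Hz]].
    exists z. split; [apply E, Qz | exact Hz].
  - intros y Qy eps Heps. destruct (Pis y (proj2 (E y) Qy) eps Heps) as [z [Pz Hz]].
    exists z. split; [apply E, Pz | exact Hz].
Qed.

Lemma perfect_True : nonempty_perfect (fun _ => True).
Proof.
  split; [|split].
  - exists 0; exact I.
  - intros x _; exact I.
  - intros x _ eps Heps. exists (x + eps / 2). split; [exact I|]. split; [lra|].
    replace (x + eps / 2 - x) with (eps / 2) by ring. rewrite Rabs_right; lra.
Qed.

Lemma Ccode_ext (k1 k2 : nat -> bool) x :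
  (forall n, k1 n = k2 n) -> Ccode k1 x -> Ccode k2 x.
Proof. intros E C n Hn. apply C. rewrite E. exact Hn. Qed.

Definition MC (k : nat -> bool) (i : nat) : nat -> bool := fun n => k (to_nat (i, n)).

Definition T3 : Type := (R * R * R)%type.
Definition T0 : T3 := (0, 0, 0).
Definition pa (t : T3) : R := fst (fst t).
Definition pb (t : T3) : R := snd (fst t).
Definition pc (t : T3) : R := snd t.

Section Construction.
Variable lt : R -> R -> Prop.
Hypothesis lt_min : forall P : R -> Prop, (exists x, P x) -> exists m, P m /\ forall y, P y -> ~ lt y m.
Hypothesis lt_tri : forall x y, lt x y \/ x = y \/ lt y x.
Hypothesis lt_trans : forall x y z, lt x y -> lt y z -> lt x z.
Hypothesis lt_irr : forall x, ~ lt x x.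

Definition Sx (x : R) : Prop := countable_set (fun y => lt y x).

Variable code : R -> (nat -> bool).
Hypothesis code_surj : forall k, exists x, Sx x /\ code x = k.
Hypothesis S_unc : ~ countable_set Sx.
Hypothesis CHh : CH.

Lemma lt_wf : well_founded lt.
Proof.
  intros x. apply NNPP. intros H.
  destruct (lt_min (fun y => ~ Acc lt y) (ex_intro _ x H)) as [m [Hm Hmin]].
  apply Hm. constructor. intros y Hy. apply NNPP. intros Hy'. exact (Hmin y Hy' Hy).
Qed.

Lemma Sx_down x y : lt y x -> Sx x -> Sx y.
Proof. intros H Sx0. apply (cnt_sub _ _ (fun z Hz => lt_trans z y x Hz H) Sx0). Qed.

Lemma le_cnt x : Sx x -> countable_set (fun y => lt y x \/ y = x).
Proof. intros H. apply cnt_union2; [exact H | apply cnt_single]. Qed.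

Definition Mset (x : R) (u : R) : Prop :=
  (forall i, nowhere_dense (Ccode (MC (code x) i))) /\ exists i, Ccode (MC (code x) i) u.

Lemma Mset_meager x : meager (Mset x).
Proof.
  destruct (classic (forall i, nowhere_dense (Ccode (MC (code x) i)))) as [V|NV].
  - exists (fun i => Ccode (MC (code x) i)). split; [exact V|]. intros u [_ H]; exact H.
  - exists (fun _ _ => False). split; [intros; apply nd_empty|]. intros u [V _]. contradiction.
Qed.

Definition Pset (x : R) (u : R) : Prop :=
  nonempty_perfect (Ccode (code x)) -> Ccode (code x) u.

Lemma Pset_perf x : nonempty_perfect (Pset x).
Proof.
  destruct (classic (nonempty_perfect (Ccode (code x)))) as [V|NV].
  - apply (perfect_ext (Ccode (code x))); [|exact V].
    intros u; unfold Pset; split; auto.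
  - apply (perfect_ext (fun _ => True)); [|exact perfect_True].
    intros u; unfold Pset; split; [intros _ H; contradiction | intros _; exact I].
Qed.

Definition Lb (x : R) (h : R -> T3) (u : R) : Prop :=
  exists y, lt y x /\ (u = pa (h y) \/ u = pb (h y)).
Definition Zb (x : R) (h : R -> T3) (w : R) : Prop :=
  exists y, lt y x /\ w = pc (h y).
Definition Lle (x : R) (h : R -> T3) (a b u : R) : Prop := Lb x h u \/ u = a \/ u = b.

Definition spec (x : R) (h : R -> T3) (t : T3) : Prop :=
  Sx x ->
  (forall y, lt y x \/ y = x -> ~ Mset y (pa t) /\ ~ Mset y (pb t)) /\
  Pset x (pa t + pb t) /\ Pset x (pc t) /\
  (forall u v, Lle x h (pa t) (pb t) u -> Lle x h (pa t) (pb t) v -> pc t <> u + v) /\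
  (forall w u v, Zb x h w -> Lle x h (pa t) (pb t) u -> (v = pa t \/ v = pb t) -> w <> u + v).

Lemma spec_local x h1 h2 t : (forall y, lt y x -> h1 y = h2 y) -> spec x h1 t -> spec x h2 t.
Proof.
  intros E Hs Sxx. destruct (Hs Sxx) as [H1 [H2 [H3 [H4 H5]]]].
  assert (ELb : forall u, Lle x h2 (pa t) (pb t) u -> Lle x h1 (pa t) (pb t) u).
  { intros u [[y [Hy Hu]]|Hu]; [left; exists y; rewrite (E y Hy); auto | right; exact Hu]. }
  assert (EZb : forall w, Zb x h2 w -> Zb x h1 w).
  { intros w [y [Hy Hw]]. exists y. rewrite (E y Hy). auto. }
  split; [exact H1|split;[exact H2|split;[exact H3|split]]].
  - intros u v Hu Hv. apply H4; apply ELb; auto.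
  - intros w u v Hw Hu Hv. apply H5; auto.
Qed.

Lemma spec_exists x h : exists t, spec x h t.
Proof.
  destruct (classic (Sx x)) as [Sxx|NS]; [|exists T0; intros H; contradiction].
  assert (cLb : countable_set (Lb x h)).
  { eapply cnt_sub; [| apply cnt_union2;
      [apply (cnt_image (fun y => lt y x) (fun y => pa (h y)) Sxx)
      |apply (cnt_image (fun y => lt y x) (fun y => pb (h y)) Sxx)]].
    intros u [y [Hy [Hu|Hu]]]; [left|right]; exists y; auto. }
  assert (cZb : countable_set (Zb x h)).
  { eapply cnt_sub; [| apply (cnt_image (fun y => lt y x) (fun y => pc (h y)) Sxx)].
    intros u [y [Hy Hu]]; exists y; auto. }
  set (MM := fun u => exists y, (lt y x \/ y = x) /\ Mset y u).
  assert (mMM : meager MM).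
  { destruct (le_cnt x Sxx) as [e He].
    apply (meager_sub (fun u => exists n, Mset (e n) u)).
    - intros u [y [Hy Hm]]. destruct (He y Hy) as [n Hn]. exists n. rewrite Hn. exact Hm.
    - apply meager_Union. intros n; apply Mset_meager. }
  destruct (perfect_avoid (Pset x) (Zb x h) (Pset_perf x) cZb) as [p [Pp nZp]].
  set (Bad := fun u => MM u \/ MM (p - u) \/
     (exists w u', Zb x h w /\ Lb x h u' /\ u = w - u') \/
     (exists w u', Zb x h w /\ Lb x h u' /\ u = p - w + u') \/
     (exists w, Zb x h w /\ u = w / 2) \/
     (exists w, Zb x h w /\ u = p - w / 2)).
  assert (mBad : meager Bad).
  { repeat apply meager_union2.
    - exact mMM.
    - apply (meager_refl MM p mMM).
    - apply cnt_meager. apply (cnt_image2 _ _ (fun w u' => w - u') cZb cLb).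
    - apply cnt_meager. apply (cnt_image2 _ _ (fun w u' => p - w + u') cZb cLb).
    - apply cnt_meager. apply (cnt_image _ (fun w => w / 2) cZb).
    - apply cnt_meager. apply (cnt_image _ (fun w => p - w / 2) cZb). }
  destruct (baire_R Bad mBad) as [a Ha].
  assert (cLle : countable_set (Lle x h a (p - a))).
  { apply cnt_union2; [exact cLb | apply cnt_union2; apply cnt_single]. }
  destruct (perfect_avoid (Pset x) (fun s => exists u v, Lle x h a (p - a) u /\ Lle x h a (p - a) v /\ s = u + v)
     (Pset_perf x) (cnt_image2 _ _ (fun u v => u + v) cLle cLle)) as [c [Pc nc]].
  exists (a, p - a, c). intros _. unfold pa, pb, pc; simpl.
  split; [|split; [|split; [|split]]].
  - intros y Hy. split; intros Hm; apply Ha.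
    + left. exists y. auto.
    + right; left. exists y. auto.
  - replace (a + (p - a)) with p by ring. exact Pp.
  - exact Pc.
  - intros u v Hu Hv E. apply nc. exists u, v. auto.
  - intros w u v Hw Hu Hv E.
    destruct Hv as [Ev|Ev]; subst v; destruct Hu as [Lu|[Eu|Eu]]; try subst u.
    + apply Ha. right; right; left. exists w, u. repeat split; auto. lra.
    + apply Ha. right; right; right; right; left. exists w. split; auto. lra.
    + apply nZp. replace p with w by lra. exact Hw.
    + apply Ha. right; right; right; left. exists w, u. repeat split; auto. lra.
    + apply nZp. replace p with w by lra. exact Hw.
    + apply Ha. right; right; right; right; right. exists w. split; auto. lra.
Qed.

Definition Fst (x : R) (rec : forall y, lt y x -> T3) : T3 :=
  epsilon (inhabits T0)
    (spec x (fun y => match excluded_middle_informative (lt y x) with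
                      | left H => rec y H | right _ => T0 end)).

Definition fseq : R -> T3 := Fix lt_wf (fun _ => T3) Fst.

Lemma Fst_ext x (g1 g2 : forall y, lt y x -> T3) :
  (forall y p, g1 y p = g2 y p) -> Fst x g1 = Fst x g2.
Proof.
  intros E.
  assert (g1 = g2).
  { apply functional_extensionality_dep. intros y. apply functional_extensionality_dep.
    intros p. apply E. }
  subst. reflexivity.
Qed.

Lemma fseq_spec x : spec x fseq (fseq x).
Proof.
  assert (Eq : fseq x = Fst x (fun y _ => fseq y)).
  { unfold fseq. apply (Fix_eq lt_wf (fun _ => T3) Fst Fst_ext). }
  rewrite Eq. unfold Fst.
  apply (spec_local x (fun y => match excluded_middle_informative (lt y x) with
                      | left _ => fseq y | right _ => T0 end)).
  - intros y Hy. destruct excluded_middle_informative; [reflexivity | contradiction].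
  - apply epsilon_spec. apply spec_exists.
Qed.

Definition Lset (u : R) : Prop := exists x, Sx x /\ (u = pa (fseq x) \/ u = pb (fseq x)).

Lemma meager_cover (M : R -> Prop) : meager M -> exists x0, Sx x0 /\ forall u, M u -> Mset x0 u.
Proof.
  intros [N [HN HM]].
  destruct (code_surj (fun j => let (i, n) := of_nat j in misses (N i) n)) as [x0 [Sx0 Hc]].
  exists x0. split; [exact Sx0|].
  assert (Ek : forall i n, MC (code x0) i n = misses (N i) n).
  { intros i n. unfold MC. rewrite Hc. rewrite cancel_of_to. reflexivity. }
  intros u Mu. split.
  - intros i. apply (nd_sub (Ccode (misses (N i)))).
    + intros z Hz. apply (Ccode_ext (MC (code x0) i)); [exact (Ek i) | exact Hz].
    + apply nd_code, HN.
  - destruct (HM u Mu) as [i Hi]. exists i.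
    apply (Ccode_ext (misses (N i))); [intros n; symmetry; apply Ek | apply sub_Ccode, Hi].
Qed.

Lemma L_M_cnt x0 : Sx x0 -> countable_set (fun u => Lset u /\ Mset x0 u).
Proof.
  intros Sx0.
  eapply cnt_sub; [| apply cnt_union2;
      [apply (cnt_image _ (fun y => pa (fseq y)) (le_cnt x0 Sx0))
      |apply (cnt_image _ (fun y => pb (fseq y)) (le_cnt x0 Sx0))]].
  intros u [[y [Sy Hu]] Mu].
  destruct (lt_tri y x0) as [H|[H|H]].
  - destruct Hu; [left|right]; exists y; auto.
  - destruct Hu; [left|right]; exists y; auto.
  - exfalso. destruct (fseq_spec y Sy) as [H1 _].
    destruct (H1 x0 (or_introl H)) as [n1 n2]. destruct Hu as [->| ->]; auto.
Qed.

Lemma Lset_Luzin : Luzin_set Lset.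
Proof.
  split.
  - destruct (CHh Lset) as [Hc|Hs]; [exfalso|exact Hs].
    destruct (meager_cover Lset (cnt_meager _ Hc)) as [x0 [Sx0 Hcov]].
    assert (Hy : exists y, Sx y /\ lt x0 y).
    { apply NNPP. intros Hno. apply S_unc.
      apply (cnt_sub (fun y => lt y x0 \/ y = x0)); [|exact (le_cnt x0 Sx0)].
      intros y Sy. destruct (lt_tri y x0) as [H|[H|H]]; auto.
      exfalso. apply Hno. exists y. auto. }
    destruct Hy as [y [Sy Hy]].
    destruct (fseq_spec y Sy) as [H1 _]. destruct (H1 x0 (or_introl Hy)) as [n1 _].
    apply n1, Hcov. exists y. auto.
  - intros M HM. destruct (meager_cover M HM) as [x0 [Sx0 Hcov]].
    apply (cnt_sub _ _ (fun u Hu => conj (proj1 Hu) (Hcov u (proj2 Hu))) (L_M_cnt x0 Sx0)).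
Qed.

Lemma stage_sum x0 y1 y2 u v : Sx x0 -> Sx y1 -> Sx y2 ->
  (u = pa (fseq y1) \/ u = pb (fseq y1)) -> (v = pa (fseq y2) \/ v = pb (fseq y2)) ->
  lt x0 y1 -> (lt y2 y1 \/ y2 = y1) -> pc (fseq x0) <> u + v.
Proof.
  intros Sx0 Sy1 Sy2 Hu Hv H01 H21 E.
  destruct (fseq_spec y1 Sy1) as [_ [_ [_ [_ H5]]]].
  apply (H5 (pc (fseq x0)) v u).
  - exists x0. auto.
  - destruct H21 as [H21|H21].
    + left. exists y2. auto.
    + subst y2. right. destruct Hv; auto.
  - exact Hu.
  - rewrite E. ring.
Qed.

Lemma Lset_Bernstein : Bernstein_set (sumset Lset Lset).
Proof.
  intros P HP. destruct HP as [Pne [Pcl Pis]].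
  destruct (code_surj (misses P)) as [x0 [Sx0 Hc]].
  assert (EP : forall u, Pset x0 u -> P u).
  { intros u Hu. apply (closed_code P Pcl u). rewrite <- Hc. apply Hu.
    apply (perfect_ext P); [|split; auto].
    intros z. rewrite Hc. split; intros; apply (closed_code P Pcl z); auto. }
  destruct (fseq_spec x0 Sx0) as [_ [H2 [H3 [H4 _]]]].
  split.
  - exists (pa (fseq x0) + pb (fseq x0)). split; [|apply EP, H2].
    exists (pa (fseq x0)), (pb (fseq x0)). repeat split; auto; exists x0; auto.
  - exists (pc (fseq x0)). split; [|apply EP, H3].
    intros [u [v [[y1 [Sy1 Hu]] [[y2 [Sy2 Hv]] E]]]].
    assert (LE : forall y w, Sx y -> (lt y x0 \/ y = x0) -> (w = pa (fseq y) \/ w = pb (fseq y)) ->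
                 Lle x0 fseq (pa (fseq x0)) (pb (fseq x0)) w).
    { intros y w _ [Hy|Hy] Hw.
      - left. exists y. auto.
      - subst y. right. exact Hw. }
    destruct (lt_tri x0 y1) as [G1|G1]; destruct (lt_tri x0 y2) as [G2|G2].
    + destruct (lt_tri y1 y2) as [H|[H|H]].
      * apply (stage_sum x0 y2 y1 v u); auto. rewrite E; ring.
      * apply (stage_sum x0 y1 y2 u v); auto.
      * apply (stage_sum x0 y1 y2 u v); auto.
    + apply (stage_sum x0 y1 y2 u v); auto.
      left. destruct G2 as [G2|G2]; [subst; auto | apply (lt_trans _ x0); auto].
    + apply (stage_sum x0 y2 y1 v u); auto.
      * left. destruct G1 as [G1|G1]; [subst; auto | apply (lt_trans _ x0); auto].
      * rewrite E; ring.
    + apply (H4 u v).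
      * apply (LE y1); auto. destruct G1 as [G1|G1]; [right; auto | left; auto].
      * apply (LE y2); auto. destruct G2 as [G2|G2]; [right; auto | left; auto].
      * exact E.
Qed.

End Construction.

Module WOmod.
Import ssreflect ssrfun ssrbool eqtype boolp wochoice Rstruct.
Lemma wo_R : exists lt : R -> R -> Prop,
  (forall P : R -> Prop, (exists x, P x) -> exists m, P m /\ forall y, P y -> ~ lt y m) /\
  (forall x y, lt x y \/ x = y \/ lt y x) /\
  (forall x y z, lt x y -> lt y z -> lt x z) /\
  (forall x, ~ lt x x).
Proof.
case: (well_ordering_principle R) => r wo.
have minP : forall P : R -> Prop, (exists x, P x) -> exists m, P m /\ forall y, P y -> r m y.
  move=> P [x Px].
  have : nonempty ((fun u => `[< P u >]) : pred R).
    by exists x; rewrite unfold_in; apply/asboolP.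
  move=> /wo [m [[Hm Hlb] _]].
  exists m; split; first by move: Hm; rewrite unfold_in => /asboolP.
  by move=> y Py; apply: Hlb; rewrite unfold_in; apply/asboolP.
have refl : forall x, r x x.
  by move=> x; have [m [Pm Hm]] := minP (fun u => u = x) (ex_intro _ x erefl); rewrite -Pm; apply: Hm.
have antis : forall x y, r x y -> r y x -> x = y.
  move=> x y rxy ryx.
  have : nonempty ((fun u => `[< u = x \/ u = y >]) : pred R).
    by exists x; rewrite unfold_in; apply/asboolP; left.
  move=> /wo [m [_ Hu]].
  have mx : forall z, minimum_of r ((fun u => `[< u = x \/ u = y >]) : pred R) z -> z = m.
    by move=> z Hz; symmetry; apply: Hu.
  have -> : x = m.
    apply: mx; split; first by rewrite unfold_in; apply/asboolP; left.
    move=> w; rewrite unfold_in => /asboolP [->|->] //.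
  symmetry; apply: mx; split; first by rewrite unfold_in; apply/asboolP; right.
  move=> w; rewrite unfold_in => /asboolP [->|->] //.
have tot : forall x y, r x y \/ r y x.
  move=> x y; have [m [[Pm|Pm] Hm]] := minP (fun u => u = x \/ u = y) (ex_intro _ x (or_introl erefl)).
  + by left; rewrite -Pm; apply: Hm; right.
  + by right; rewrite -Pm; apply: Hm; left.
have trans : forall x y z, r x y -> r y z -> r x z.
  move=> x y z rxy ryz.
  have [m [Pm Hm]] := minP (fun u => u = x \/ u = y \/ u = z) (ex_intro _ x (or_introl erefl)).
  case: Pm => [Em|[Em|Em]]; subst m.
  + by apply: Hm; right; right.
  + have -> : x = y by apply: antis => //; apply: Hm; left.
    done.
  + have eyz : y = z by apply: antis => //; apply: Hm; right; left.
    by rewrite -eyz.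
exists (fun x y => r x y /\ x <> y); split; [|split; [|split]].
- move=> P ex; have [m [Pm Hm]] := minP P ex.
  exists m; split=> // y Py [ryx nyx]; apply: nyx; apply: antis => //; exact: Hm.
- move=> x y; case: (Classical_Prop.classic (x = y)) => [->|nxy]; first by right; left.
  case: (tot x y) => H; [left | right; right]; split=> //; by move=> e; apply: nxy.
- move=> x y z [rxy nxy] [ryz nyz]; split; first exact: trans rxy ryz.
  move=> exz; subst z; apply: nxy; exact: antis.
- by move=> x [_ H].
Qed.
End WOmod.

Theorem mainTheorem17 :
  CH -> exists L : R -> Prop, Luzin_set L /\ Bernstein_set (sumset L L).
Proof.
  intros CHh.
  destruct WOmod.wo_R as [lt [lt_min [lt_tri [lt_trans lt_irr]]]].
  assert (S_unc : ~ countable_set (Sx lt)).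
  { intros Hc.
    destruct (perfect_avoid (fun _ => True) (Sx lt) perfect_True Hc) as [x0 [_ nx0]].
    destruct (lt_min (fun y => ~ Sx lt y) (ex_intro _ x0 nx0)) as [m [Hm Hmin]].
    apply Hm. apply (cnt_sub (Sx lt)); [|exact Hc].
    intros y Hy. apply NNPP. intros nSy. exact (Hmin y nSy Hy). }
  destruct (CHh (Sx lt)) as [Hc|[g [ginj gS]]]; [contradiction|].
  set (code := fun x => epsilon (inhabits (fun _ : nat => false)) (fun k => g (hK k) = x)).
  assert (code_surj : forall k, exists x, Sx lt x /\ code x = k).
  { intros k. exists (g (hK k)). split; [apply gS|].
    apply hK_inj, ginj. unfold code.
    apply (epsilon_spec (inhabits (fun _ : nat => false)) (fun k0 => g (hK k0) = g (hK k))).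
    exists k. reflexivity. }
  exists (Lset lt lt_min code). split.
  - exact (Lset_Luzin lt lt_min lt_tri code code_surj S_unc CHh).
  - exact (Lset_Bernstein lt lt_min lt_tri lt_trans code code_surj).
Qed.
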